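(* Let $v$ be a weight on $[0,1)$ satisfying $\lim_{r\to1^-}v(r)=0$ and let $t\in[0,1)$. Identifying the bidual $(H^0_v)''$ with $H^\infty_v$ via the canonical isometric isomorphism, the bi-transpose $C_t''\colon H^\infty_v\to H^\infty_v$ of $C_t\colon H^0_v\to H^0_v$ coincides with $C_t\colon H^\infty_v\to H^\infty_v$.
   Context: $\mathbb{D}=\{z\in\mathbb{C}:|z|<1\}$ and $H(\mathbb{D})$ is the space of holomorphic functions on $\mathbb{D}$. A weight is a continuous non-increasing function $v\colon[0,1)\to(0,\infty)$, extended to $\mathbb{D}$ by $v(z):=v(|z|)$. $H^\infty_v=\{f\in H(\mathbb{D}):\|f\|_{\infty,v}:=\sup_{z\in\mathbb{D}}|f(z)|v(z)<\infty\}$ and $H^0_v=\{f\in H(\mathbb{D}):\lim_{|z|\to1^-}|f(z)|v(z)=0\}$, both with the norm $\|\cdot\|_{\infty,v}$. When $\lim_{r\to1^-}v(r)=0$, $H^\infty_v$ is canonically isometric to $(H^0_v)''$: letting $X$ be the Banach space of linear functionals on $H^\infty_v$ whose restriction to the closed unit ball $U_v$ of $H^\infty_v$ is continuous for the topology of uniform convergence on compact subsets of $\mathbb{D}$ (normed by $\sup_{f\in U_v}|F(f)|$), the restriction map $F\mapsto F|_{H^0_v}$ is an isometric isomorphism of $X$ onto $(H^0_v)'$, and the evaluation map $f\mapsto(F\mapsto F(f))$ is an isometric isomorphism of $H^\infty_v$ onto $X'$; composing gives $H^\infty_v\cong(H^0_v)''$. For $t\in[0,1]$ the generalized Cesàro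 operator $C_t$ is defined on $f\in H(\mathbb{D})$ by $C_tf(0)=f(0)$ and $C_tf(z)=\frac{1}{z}\int_0^z\frac{f(\xi)}{1-t\xi}\,d\xi$ for $z\neq0$; for $t\in[0,1)$ it maps $H^0_v$ and $H^\infty_v$ continuously into themselves. *)

(* Defs.v *)
From Stdlib Require Import Reals.
From Coquelicot Require Import Coquelicot.
Open Scope R_scope.

Definition inD (z : C) : Prop := Cmod z < 1.

Definition is_weight (v : R -> R) : Prop :=
  (forall r, 0 <= r < 1 -> continuity_pt v r) /\
  (forall r s, 0 <= r -> r <= s -> s < 1 -> v s <= v r) /\
  (forall r, 0 <= r < 1 -> 0 < v r).

(* Elements of H(D) are represented as functions C -> C that are complex
   differentiable at every point of D and vanish outside D (canonical
   representative, so that H(D) is literally a set of functions). *)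
Definition holD (f : C -> C) : Prop :=
  (forall z, inD z -> ex_derive (K:=C_AbsRing) (V:=C_NormedModule) f z) /\
  (forall z, ~ inD z -> f z = 0%C).

Definition wbound (v : R -> R) (f : C -> C) (c : R) : Prop :=
  forall z, inD z -> Cmod (f z) * v (Cmod z) <= c.

Definition Hinf (v : R -> R) (f : C -> C) : Prop :=
  holD f /\ exists c, wbound v f c.

Definition H0 (v : R -> R) (f : C -> C) : Prop :=
  holD f /\
  forall eps, 0 < eps -> exists r, r < 1 /\
    forall z, r < Cmod z -> Cmod z < 1 -> Cmod (f z) * v (Cmod z) < eps.

Definition Uv (v : R -> R) (f : C -> C) : Prop := holD f /\ wbound v f 1.

Definition fadd (f g : C -> C) : C -> C := fun z => (f z + g z)%C.
Definition fscal (a : C) (f : C -> C) : C -> C := fun z => (a * f z)%C.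

Definition linear_on (S : (C -> C) -> Prop) (F : (C -> C) -> C) : Prop :=
  (forall f g, S f -> S g -> F (fadd f g) = (F f + F g)%C) /\
  (forall a f, S f -> F (fscal a f) = (a * F f)%C).

Definition in_dual0 (v : R -> R) (phi : (C -> C) -> C) : Prop :=
  linear_on (H0 v) phi /\
  exists M, forall h c, H0 v h -> 0 <= c -> wbound v h c -> Cmod (phi h) <= M * c.

(* Continuity of the restriction of F to U_v for the topology tau_0 of
   uniform convergence on compact subsets of D (neighbourhood base given by
   the closed discs of radius r < 1). *)
Definition tau0_cont_on_Uv (v : R -> R) (F : (C -> C) -> C) : Prop :=
  forall f, Uv v f -> forall eps, 0 < eps ->
    exists r delta, 0 <= r < 1 /\ 0 < delta /\
      forall g, Uv v g ->
        (forall z, Cmod z <= r -> Cmod (g z - f z)%C < delta) ->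
        Cmod (F g - F f)%C < eps.

(* The space X (predual of H^infty_v). *)
Definition in_X (v : R -> R) (F : (C -> C) -> C) : Prop :=
  linear_on (Hinf v) F /\ tau0_cont_on_Uv v F.

(* Generalized Cesaro operator: C_t f(0) = f(0),
   C_t f(z) = (1/z) int_0^z f(xi)/(1 - t xi) dxi  (integral along [0,z],
   parametrized xi = s z, dxi = z ds), and 0 outside D. *)
Definition Ces (t : R) (f : C -> C) : C -> C := fun z =>
  if Rlt_dec (Cmod z) 1 then
    if Req_EM_T (Cmod z) 0 then f 0%C
    else (/ z * RInt (V:=C_R_CompleteNormedModule)
             (fun s : R => (z * (f (RtoC s * z) / (1 - RtoC t * (RtoC s * z)))))%C
             0 1)%C
  else 0%C.

(* Main.v *)
Require Import Defs.
From Stdlib Require Import Reals Lra Psatz ClassicalEpsilon FunctionalExtensionality Classical.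
From Coquelicot Require Import Coquelicot.
Open Scope R_scope.

Definition Cder (f : C -> C) (z l : C) :=
  is_derive (K:=C_AbsRing) (V:=C_NormedModule) f z l.

Lemma locally_Cmod (z : C) (P : C -> Prop) :
  locally z P <-> exists del, 0 < del /\ forall w, Cmod (w - z) < del -> P w.
Proof.
  split.
  - intros [eps He].
    exists eps. split. apply cond_pos.
    intros w Hw. apply He.
    apply (norm_compat1 (K:=C_AbsRing) (V:=C_NormedModule)). exact Hw.
  - intros [del [Hd H]].
    set (e := mkposreal _ (Rmult_lt_0_compat _ _ Hd (Rinv_0_lt_compat _ (sqrt_lt_R0 2 Rlt_0_2)))).
    exists e. intros w Hw.
    apply H.
    generalize (norm_compat2 (K:=C_AbsRing) (V:=C_NormedModule) z w e Hw).
    change (norm_factor (K:=C_AbsRing) (V:=C_NormedModule)) with (sqrt 2).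
    change (norm (K:=C_AbsRing) (V:=C_NormedModule) (minus w z)) with (Cmod (w - z)).
    simpl. intros H1. replace (sqrt 2 * (del * / sqrt 2)) with del in H1. exact H1.
    field. apply Rgt_not_eq, sqrt_lt_R0; lra.
Qed.

Lemma locally_Cmod' (z : C) (P : C -> Prop) :
  @locally (AbsRing_UniformSpace C_AbsRing) z P <-> exists del, 0 < del /\ forall w, Cmod (w - z) < del -> P w.
Proof.
  split.
  - intros [eps He]. exists eps. split. apply cond_pos. intros w Hw. apply He. exact Hw.
  - intros [del [Hd H]]. exists (mkposreal _ Hd). intros w Hw. apply H. exact Hw.
Qed.

Lemma Cder_intro (f : C -> C) (z l : C) :
  (forall eps, 0 < eps -> exists del, 0 < del /\ forall w, Cmod (w - z) < del ->
     Cmod (f w - f z - (w - z) * l) <= eps * Cmod (w - z)) -> Cder f z l.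
Proof.
  intros H. split.
  - apply is_linear_scal_l.
  - intros x Hx.
    assert (E : z = x) by (apply (is_filter_lim_locally_unique (K:=C_AbsRing) (V:=AbsRing_NormedModule C_AbsRing)); exact Hx).
    subst x. intros eps.
    apply locally_Cmod'.
    destruct (H eps (cond_pos eps)) as [del [Hd Hw]].
    exists del. split; auto.
Qed.

Lemma Cder_elim (f : C -> C) (z l : C) : Cder f z l ->
  (forall eps, 0 < eps -> exists del, 0 < del /\ forall w, Cmod (w - z) < del ->
     Cmod (f w - f z - (w - z) * l) <= eps * Cmod (w - z)).
Proof.
  intros [_ H] eps He.
  assert (Hz : @is_filter_lim (AbsRing_NormedModule C_AbsRing) (@locally (AbsRing_UniformSpace C_AbsRing) z) z) by (intros P HP; exact HP).
  specialize (H z Hz (mkposreal eps He)).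
  apply locally_Cmod' in H. exact H.
Qed.

Definition CI (g : R -> C) (a b : R) : C := RInt (V:=C_R_CompleteNormedModule) g a b.
Definition isCI (g : R -> C) (a b : R) (l : C) : Prop := is_RInt (V:=C_R_NormedModule) g a b l.

Lemma isCI_fst g a b l : isCI g a b l -> is_RInt (fun s => fst (g s)) a b (fst l).
Proof. intros H. exact (is_RInt_fct_extend_fst (U:=R_NormedModule) (V:=R_NormedModule) g a b l H). Qed.
Lemma isCI_snd g a b l : isCI g a b l -> is_RInt (fun s => snd (g s)) a b (snd l).
Proof. intros H. exact (is_RInt_fct_extend_snd (U:=R_NormedModule) (V:=R_NormedModule) g a b l H). Qed.
Lemma isCI_pair g a b l1 l2 : is_RInt (fun s => fst (g s)) a b l1 ->
  is_RInt (fun s => snd (g s)) a b l2 -> isCI g a b (l1, l2).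
Proof. intros H1 H2. exact (is_RInt_fct_extend_pair (U:=R_NormedModule) (V:=R_NormedModule) g a b l1 l2 H1 H2). Qed.

Lemma isCI_Cmult (c : C) g a b l : isCI g a b l -> isCI (fun s => c * g s)%C a b (c * l)%C.
Proof.
  intros H.
  destruct c as [cr ci].
  assert (H1 := isCI_fst _ _ _ _ H). assert (H2 := isCI_snd _ _ _ _ H).
  replace (((cr, ci) * l)%C) with (cr * fst l - ci * snd l, cr * snd l + ci * fst l).
  2:{ destruct l; unfold Cmult; simpl; reflexivity. }
  apply isCI_pair.
  - eapply is_RInt_ext. 2: apply (is_RInt_minus _ _ _ _ _ _ (is_RInt_scal _ _ _ cr _ H1) (is_RInt_scal _ _ _ ci _ H2)).
    intros x _. unfold Cmult; simpl. unfold minus, plus, opp, scal; simpl. unfold mult; simpl. ring.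
  - eapply is_RInt_ext. 2: apply (is_RInt_plus _ _ _ _ _ _ (is_RInt_scal _ _ _ cr _ H2) (is_RInt_scal _ _ _ ci _ H1)).
    intros x _. unfold Cmult; simpl. unfold plus, scal; simpl. unfold mult; simpl. ring.
Qed.

Lemma CI_correct g a b : ex_RInt (V:=C_R_NormedModule) g a b -> isCI g a b (CI g a b).
Proof. intros H. exact (RInt_correct (V:=C_R_CompleteNormedModule) g a b H). Qed.
Lemma CI_unique g a b l : isCI g a b l -> CI g a b = l.
Proof. intros H. exact (is_RInt_unique (V:=C_R_CompleteNormedModule) g a b l H). Qed.

Lemma isCI_plus g h a b l1 l2 : isCI g a b l1 -> isCI h a b l2 -> isCI (fun s => g s + h s)%C a b (l1 + l2)%C.
Proof. intros H1 H2. exact (is_RInt_plus (V:=C_R_NormedModule) g h a b l1 l2 H1 H2). Qed.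
Lemma isCI_minus g h a b l1 l2 : isCI g a b l1 -> isCI h a b l2 -> isCI (fun s => g s - h s)%C a b (l1 - l2)%C.
Proof. intros H1 H2. exact (is_RInt_minus (V:=C_R_NormedModule) g h a b l1 l2 H1 H2). Qed.
Lemma isCI_ext g h a b l : (forall s, 0 <= s <= 1 -> g s = h s) -> a = 0 -> b = 1 -> isCI g a b l -> isCI h a b l.
Proof. intros E -> -> H. apply (is_RInt_ext (V:=C_R_NormedModule) g). 2: exact H.
  intros x Hx. apply E. rewrite Rmin_left in Hx by lra. rewrite Rmax_right in Hx by lra. lra. Qed.

Lemma isCI_bound g l M : (forall s, 0 <= s <= 1 -> Cmod (g s) <= M) -> isCI g 0 1 l -> Cmod l <= M.
Proof.
  intros Hb H.
  assert (Hn := norm_RInt_le_const (V:=C_R_NormedModule) g 0 1 l M Rle_0_1).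
  rewrite Cmod_norm. replace M with ((1 - 0) * M) by ring. apply Hn; auto.
  intros x Hx. rewrite <- Cmod_norm. apply Hb; auto.
Qed.

Definition Rcont (g : R -> C) (s : R) := forall eps, 0 < eps -> exists del, 0 < del /\
  forall s', Rabs (s' - s) < del -> Cmod (g s' - g s) < eps.
Definition Ccont (u : C -> C) (z : C) := forall eps, 0 < eps -> exists del, 0 < del /\
  forall w, Cmod (w - z) < del -> Cmod (u w - u z) < eps.

Lemma Rcont_continuous g s : Rcont g s -> continuous (T:=R_UniformSpace) (U:=C_R_NormedModule) g s.
Proof.
  intros H. apply filterlim_locally. intros eps.
  destruct (H eps (cond_pos eps)) as [del [Hd Hs]].
  exists (mkposreal _ Hd). intros s' Hs'.
  apply (norm_compat1 (K:=R_AbsRing) (V:=C_R_NormedModule)).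
  rewrite <- Cmod_norm. apply Hs. exact Hs'.
Qed.

Lemma ex_CI g a b : (forall s, Rmin a b <= s <= Rmax a b -> Rcont g s) -> ex_RInt (V:=C_R_NormedModule) g a b.
Proof.
  intros H. apply (ex_RInt_continuous (V:=C_R_CompleteNormedModule)).
  intros z Hz. apply Rcont_continuous, H, Hz.
Qed.

Lemma isCI_const (c : C) : isCI (fun _ => c) 0 1 c.
Proof.
  assert (H := is_RInt_const (V:=C_R_NormedModule) 0 1 c).
  assert (E : scal (K:=R_AbsRing) (V:=C_R_NormedModule) (1 - 0) c = c).
  { rewrite scal_R_Cmult. replace (1 - 0) with 1 by ring. apply Cmult_1_l. }
  cut (isCI (fun _ => c) 0 1 (scal (K:=R_AbsRing) (V:=C_R_NormedModule) (1 - 0) c)).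
  { rewrite E. auto. } exact H.
Qed.

Lemma isCI_id (c : C) : isCI (fun s => RtoC s * c)%C 0 1 (c / 2)%C.
Proof.
  destruct c as [cr ci].
  replace ((cr, ci) / 2)%C with (cr / 2, ci / 2).
  2:{ unfold Cdiv, Cmult, Cinv; simpl. f_equal; field. }
  apply isCI_pair.
  - apply (is_RInt_ext (fun s => cr * s)).
    + intros x _. unfold RtoC, Cmult; simpl. ring.
    + replace (cr / 2) with (minus (cr * 1 ^ 2 / 2) (cr * 0 ^ 2 / 2)).
      2:{ unfold minus, plus, opp; simpl. field. }
      apply (is_RInt_derive (fun s => cr * s ^ 2 / 2) (fun s => cr * s)).
      * intros x _. auto_derive; auto. field.
      * intros x _. apply continuity_pt_filterlim. reg.
  - apply (is_RInt_ext (fun s => ci * s)).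
    + intros x _. unfold RtoC, Cmult; simpl. ring.
    + replace (ci / 2) with (minus (ci * 1 ^ 2 / 2) (ci * 0 ^ 2 / 2)).
      2:{ unfold minus, plus, opp; simpl. field. }
      apply (is_RInt_derive (fun s => ci * s ^ 2 / 2) (fun s => ci * s)).
      * intros x _. auto_derive; auto. field.
      * intros x _. apply continuity_pt_filterlim. reg.
Qed.

Ltac Ceq := apply injective_projections; unfold Cdiv, Cinv, Cplus, Cminus, Cmult, Copp, RtoC; simpl; field.
Ltac Ceqr := apply injective_projections; unfold Cplus, Cminus, Cmult, Copp, RtoC; simpl; ring.

Definition seg (a b : C) (s : R) : C := (a + RtoC s * (b - a))%C.
Definition Ig (u : C -> C) (a b : C) : C := CI (fun s => (b - a) * u (seg a b s))%C 0 1.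
Definition SegCont (u : C -> C) (a b : C) := forall s, 0 <= s <= 1 -> Ccont u (seg a b s).

Lemma Cmod_RtoC_mult (r : R) (z : C) : Cmod (RtoC r * z) = Rabs r * Cmod z.
Proof. rewrite Cmod_mult, Cmod_R. reflexivity. Qed.

Lemma Rcont_seg u a b s : Ccont u (seg a b s) -> Rcont (fun s => (b - a) * u (seg a b s))%C s.
Proof.
  intros H eps He.
  set (K := Cmod (b - a) + 1).
  assert (HK : 0 < K) by (unfold K; generalize (Cmod_ge_0 (b - a)); lra).
  destruct (H (eps / K)) as [del [Hd Hw]]. apply Rdiv_lt_0_compat; auto.
  exists (del / K). split. apply Rdiv_lt_0_compat; auto.
  intros s' Hs'.
  replace ((b - a) * u (seg a b s') - (b - a) * u (seg a b s))%C with ((b - a) * (u (seg a b s') - u (seg a b s)))%C by Ceqr.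
  rewrite Cmod_mult.
  assert (Hc : Cmod (u (seg a b s') - u (seg a b s)) < eps / K).
  { apply Hw. replace (seg a b s' - seg a b s)%C with (RtoC (s' - s) * (b - a))%C by (unfold seg; Ceqr).
    rewrite Cmod_RtoC_mult.
    apply Rle_lt_trans with (Rabs (s' - s) * K).
    apply Rmult_le_compat_l. apply Rabs_pos. unfold K; lra.
    replace del with (del / K * K) by (field; lra). apply Rmult_lt_compat_r; auto. }
  assert (HeK : 0 < eps / K) by (apply Rdiv_lt_0_compat; auto).
  apply Rle_lt_trans with (Cmod (b - a) * (eps / K)).
  apply Rmult_le_compat_l. apply Cmod_ge_0. lra.
  replace eps with (K * (eps / K)) at 2 by (field; lra).
  apply Rmult_lt_compat_r; auto. unfold K; lra.
Qed.

Lemma ex_Ig u a b : SegCont u a b -> ex_RInt (V:=C_R_NormedModule) (fun s => (b - a) * u (seg a b s))%C 0 1.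
Proof.
  intros H. apply ex_CI. intros s Hs. rewrite Rmin_left, Rmax_right in Hs by lra.
  apply Rcont_seg, H, Hs.
Qed.

Lemma isIg u a b : SegCont u a b -> isCI (fun s => (b - a) * u (seg a b s))%C 0 1 (Ig u a b).
Proof. intros H. apply CI_correct, ex_Ig, H. Qed.

Lemma Ig_bound u a b M : SegCont u a b -> (forall s, 0 <= s <= 1 -> Cmod (u (seg a b s)) <= M) ->
  Cmod (Ig u a b) <= Cmod (b - a) * M.
Proof.
  intros H Hb. apply (isCI_bound (fun s => (b - a) * u (seg a b s))%C). 2: apply (isIg _ _ _ H).
  intros s Hs. rewrite Cmod_mult. apply Rmult_le_compat_l. apply Cmod_ge_0. apply Hb, Hs.
Qed.

Lemma Ig_minus u1 u2 a b : SegCont u1 a b -> SegCont u2 a b ->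
  Ig (fun w => u1 w - u2 w)%C a b = (Ig u1 a b - Ig u2 a b)%C.
Proof.
  intros H1 H2. apply CI_unique.
  eapply isCI_ext. 4: apply (isCI_minus _ _ _ _ _ _ (isIg _ _ _ H1) (isIg _ _ _ H2)).
  intros s _. simpl. Ceqr. reflexivity. reflexivity.
Qed.

Lemma Ig_affine (al be a b : C) : Ig (fun w => al + be * w)%C a b = (al * (b - a) + be * (b * b - a * a) / 2)%C.
Proof.
  apply CI_unique.
  replace (al * (b - a) + be * (b * b - a * a) / 2)%C with ((b - a) * (al + be * a) + be * (b - a) * (b - a) / 2)%C by Ceq.
  eapply isCI_ext. 4: apply (isCI_plus _ _ _ _ _ _ (isCI_const ((b - a) * (al + be * a))%C) (isCI_id (be * (b - a) * (b - a))%C)).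
  intros s _. unfold seg. Ceqr. reflexivity. reflexivity.
Qed.


Lemma Ig_rev u a b : SegCont u a b -> Ig u b a = (- Ig u a b)%C.
Proof.
  intros H. apply CI_unique.
  set (g := fun s => ((b - a) * u (seg a b s))%C).
  assert (Hs : is_RInt (V:=C_R_NormedModule) g (-1 * 0 + 1) (-1 * 1 + 1) (opp (G:=C_R_NormedModule) (Ig u a b))).
  { replace (-1 * 0 + 1) with 1 by ring. replace (-1 * 1 + 1) with 0 by ring.
    apply (is_RInt_swap (V:=C_R_NormedModule)). apply (isIg _ _ _ H). }
  apply (is_RInt_comp_lin (V:=C_R_NormedModule)) in Hs.
  eapply isCI_ext. 4: exact Hs. 2,3: reflexivity.
  intros s _. unfold g. rewrite scal_R_Cmult.
  replace (seg a b (-1 * s + 1)) with (seg b a s) by (unfold seg; Ceqr).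
  generalize (u (seg b a s)); intro c. Ceqr.
Qed.

Lemma ex_Ig_sub u a b c d : SegCont u a b -> 0 <= c <= 1 -> 0 <= d <= 1 ->
  ex_RInt (V:=C_R_NormedModule) (fun s => (b - a) * u (seg a b s))%C c d.
Proof.
  intros H Hc Hd. apply ex_CI. intros s Hs. apply Rcont_seg, H.
  split. apply Rle_trans with (Rmin c d). apply Rmin_glb; lra. lra.
  apply Rle_trans with (Rmax c d). lra. apply Rmax_lub; lra.
Qed.

Lemma Ig_split u a b : SegCont u a b ->
  Ig u a b = (Ig u a ((a + b) / 2) + Ig u ((a + b) / 2) b)%C.
Proof.
  intros H.
  set (g := fun s => ((b - a) * u (seg a b s))%C).
  assert (E1 : Ig u a ((a + b) / 2) = CI g 0 (1/2)).
  { apply CI_unique.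
    assert (Hs : is_RInt (V:=C_R_NormedModule) g (1/2 * 0 + 0) (1/2 * 1 + 0) (CI g 0 (1/2))).
    { replace (1/2 * 0 + 0) with 0 by field. replace (1/2 * 1 + 0) with (1/2) by field.
      apply CI_correct. apply ex_Ig_sub; auto; lra. }
    apply (is_RInt_comp_lin (V:=C_R_NormedModule)) in Hs.
    eapply isCI_ext. 4: exact Hs. 2,3: reflexivity.
    intros s _. unfold g. rewrite scal_R_Cmult.
    replace (seg a b (1/2 * s + 0)) with (seg a ((a + b) / 2) s) by (unfold seg; Ceq).
    generalize (u (seg a ((a + b) / 2) s)); intro c. Ceq. }
  assert (E2 : Ig u ((a + b) / 2) b = CI g (1/2) 1).
  { apply CI_unique.
    assert (Hs : is_RInt (V:=C_R_NormedModule) g (1/2 * 0 + 1/2) (1/2 * 1 + 1/2) (CI g (1/2) 1)).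
    { replace (1/2 * 0 + 1/2) with (1/2) by field. replace (1/2 * 1 + 1/2) with 1 by field.
      apply CI_correct. apply ex_Ig_sub; auto; lra. }
    apply (is_RInt_comp_lin (V:=C_R_NormedModule)) in Hs.
    eapply isCI_ext. 4: exact Hs. 2,3: reflexivity.
    intros s _. unfold g. rewrite scal_R_Cmult.
    replace (seg a b (1/2 * s + 1/2)) with (seg ((a + b) / 2) b s) by (unfold seg; Ceq).
    generalize (u (seg ((a + b) / 2) b s)); intro c. Ceq. }
  rewrite E1, E2. unfold Ig. fold g. unfold CI.
  symmetry. apply (RInt_Chasles (V:=C_R_CompleteNormedModule)); apply ex_Ig_sub; auto; lra.
Qed.

Lemma Cder_Ccont u z l : Cder u z l -> Ccont u z.
Proof.
  intros H eps He.
  destruct (Cder_elim _ _ _ H 1 Rlt_0_1) as [d1 [Hd1 H1]].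
  set (K := Cmod l + 2).
  assert (HK : 0 < K) by (unfold K; generalize (Cmod_ge_0 l); lra).
  exists (Rmin d1 (eps / K)). split. apply Rmin_pos; auto. apply Rdiv_lt_0_compat; auto.
  intros w Hw.
  assert (Hw1 : Cmod (w - z) < d1) by (generalize (Rmin_l d1 (eps / K)); lra).
  assert (Hw2 : Cmod (w - z) < eps / K) by (generalize (Rmin_r d1 (eps / K)); lra).
  specialize (H1 w Hw1).
  replace (u w - u z)%C with ((u w - u z - (w - z) * l) + (w - z) * l)%C by Ceqr.
  eapply Rle_lt_trans. apply Cmod_triangle.
  rewrite Cmod_mult.
  apply Rle_lt_trans with (Cmod (w - z) * (Cmod l + 1)).
  { generalize (Cmod_ge_0 (w - z)) (Cmod_ge_0 l). rewrite Rmult_1_l in H1. intros; nra. }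
  apply Rle_lt_trans with (eps / K * (Cmod l + 1)).
  apply Rmult_le_compat_r. generalize (Cmod_ge_0 l); lra. lra.
  unfold Rdiv. rewrite Rmult_assoc. rewrite <- (Rmult_1_r eps) at 2.
  apply Rmult_lt_compat_l; auto. unfold K. apply (Rmult_lt_reg_l (Cmod l + 2)). generalize (Cmod_ge_0 l); lra.
  rewrite <- Rmult_assoc, Rinv_r, Rmult_1_l, Rmult_1_r. lra. generalize (Cmod_ge_0 l); lra.
Qed.

Lemma seg_mod a b s rho : Cmod a <= rho -> Cmod b <= rho -> 0 <= s <= 1 -> Cmod (seg a b s) <= rho.
Proof.
  intros Ha Hb Hs.
  replace (seg a b s) with (RtoC (1 - s) * a + RtoC s * b)%C by (unfold seg; Ceqr).
  eapply Rle_trans. apply Cmod_triangle.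
  rewrite !Cmod_RtoC_mult. rewrite !Rabs_pos_eq by lra. nra.
Qed.

Lemma Ccont_SegCont u a b rho : rho < 1 -> (forall w, Cmod w < 1 -> Ccont u w) ->
  Cmod a <= rho -> Cmod b <= rho -> SegCont u a b.
Proof.
  intros Hr Hc Ha Hb s Hs. apply Hc. generalize (seg_mod a b s rho Ha Hb Hs). lra.
Qed.

Lemma small_pow (P e : R) : 0 < e -> exists n, P * (/2) ^ n < e.
Proof.
  intros He.
  destruct (pow_lt_1_zero (/2)) with (y := e / (Rabs P + 1)) as [N HN].
  rewrite Rabs_pos_eq; lra. apply Rdiv_lt_0_compat; auto. generalize (Rabs_pos P); lra.
  exists N. specialize (HN N (le_n N)).
  rewrite Rabs_pos_eq in HN. 2: apply pow_le; lra.
  assert (H0 : 0 <= (/2) ^ N) by (apply pow_le; lra).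
  apply Rle_lt_trans with (Rabs P * (/2) ^ N).
  apply Rmult_le_compat_r; auto. apply Rle_abs.
  apply Rle_lt_trans with ((Rabs P + 1) * (/2) ^ N). 
  apply Rmult_le_compat_r; auto; lra.
  apply Rmult_lt_reg_l with (/ (Rabs P + 1)). apply Rinv_0_lt_compat. generalize (Rabs_pos P); lra.
  rewrite <- Rmult_assoc, Rinv_l. 2: generalize (Rabs_pos P); lra.
  rewrite Rmult_1_l. unfold Rdiv in HN. rewrite Rmult_comm. exact HN.
Qed.

Lemma cauchy_lim (x e : nat -> R) : (forall n m, (n <= m)%nat -> Rabs (x m - x n) <= e n) ->
  (forall eps, 0 < eps -> exists N, e N < eps) ->
  exists L, forall n, Rabs (L - x n) <= e n.
Proof.
  intros H He.
  assert (Hc : ex_lim_seq_cauchy x).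
  { intros eps. destruct (He (eps / 2)) as [N HN]. generalize (cond_pos eps); lra.
    exists N. intros n m Hn Hm.
    replace (x n - x m) with ((x n - x N) - (x m - x N)) by ring.
    eapply Rle_lt_trans. apply Rabs_triang. rewrite Rabs_Ropp.
    generalize (H N n Hn) (H N m Hm). lra. }
  apply ex_lim_seq_cauchy_corr in Hc.
  destruct Hc as [L Hl].
  exists L. intros n.
  assert (Hup : Rbar_le L (x n + e n)).
  { apply (is_lim_seq_le_loc x (fun _ => x n + e n) _ _). 
    exists n. intros m Hm. generalize (H n m Hm). intros Hb. apply Rabs_le_between in Hb. lra.
    exact Hl. apply is_lim_seq_const. }
  assert (Hlo : Rbar_le (x n - e n) L).
  { apply (is_lim_seq_le_loc (fun _ => x n - e n) x _ _). 
    exists n. intros m Hm. generalize (H n m Hm). intros Hb. apply Rabs_le_between in Hb. lra.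
    apply is_lim_seq_const. exact Hl. }
  simpl in *. apply Rabs_le_between. lra.
Qed.

Definition tri := (C * C * C)%type.
Definition T3 (u : C -> C) (t : tri) : C := let '(a, b, c) := t in (Ig u a b + Ig u b c + Ig u c a)%C.
Definition Per (t : tri) : R := let '(a, b, c) := t in Cmod (b - a) + Cmod (c - b) + Cmod (a - c).
Definition InB (rho : R) (t : tri) : Prop := let '(a, b, c) := t in Cmod a <= rho /\ Cmod b <= rho /\ Cmod c <= rho.
Definition vA (t : tri) : C := let '(a, _, _) := t in a.
Definition sub1 (t : tri) : tri := let '(a, b, c) := t in (a, (a + b) / 2, (c + a) / 2)%C.
Definition sub2 (t : tri) : tri := let '(a, b, c) := t in ((a + b) / 2, b, (b + c) / 2)%C.
Definition sub3 (t : tri) : tri := let '(a, b, c) := t in ((c + a) / 2, (b + c) / 2, c)%C.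
Definition sub4 (t : tri) : tri := let '(a, b, c) := t in ((a + b) / 2, (b + c) / 2, (c + a) / 2)%C.
Definition best2 (u : C -> C) (x y : tri) : tri := if Rle_dec (Cmod (T3 u y)) (Cmod (T3 u x)) then x else y.
Definition step (u : C -> C) (t : tri) : tri := best2 u (best2 u (sub1 t) (sub2 t)) (best2 u (sub3 t) (sub4 t)).

Lemma mid_mod a b rho : Cmod a <= rho -> Cmod b <= rho -> Cmod ((a + b) / 2) <= rho.
Proof.
  intros Ha Hb. replace ((a + b) / 2)%C with (seg a b (1/2)) by (unfold seg; Ceq).
  apply seg_mod; auto; lra.
Qed.

Lemma T3_decomp u rho t : rho < 1 -> (forall w, Cmod w < 1 -> Ccont u w) -> InB rho t ->
  T3 u t = (T3 u (sub1 t) + T3 u (sub2 t) + T3 u (sub3 t) + T3 u (sub4 t))%C.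
Proof.
  intros Hr Hc. destruct t as [[a b] c]. simpl. intros [Ha [Hb Hcc]].
  assert (H1 := mid_mod a b rho Ha Hb). assert (H2 := mid_mod b c rho Hb Hcc).
  assert (H3 := mid_mod c a rho Hcc Ha).
  rewrite (Ig_split u a b), (Ig_split u b c), (Ig_split u c a) by (eapply Ccont_SegCont; eauto).
  rewrite (Ig_rev u ((c + a) / 2) ((a + b) / 2)) by (eapply Ccont_SegCont; eauto).
  rewrite (Ig_rev u ((a + b) / 2) ((b + c) / 2)) by (eapply Ccont_SegCont; eauto).
  rewrite (Ig_rev u ((b + c) / 2) ((c + a) / 2)) by (eapply Ccont_SegCont; eauto).
  Ceqr.
Qed.

Lemma InB_sub rho t : InB rho t -> InB rho (sub1 t) /\ InB rho (sub2 t) /\ InB rho (sub3 t) /\ InB rho (sub4 t).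
Proof.
  destruct t as [[a b] c]. simpl. intros [Ha [Hb Hc]].
  assert (H1 := mid_mod a b rho Ha Hb). assert (H2 := mid_mod b c rho Hb Hc).
  assert (H3 := mid_mod c a rho Hc Ha). tauto.
Qed.

Lemma Cmod_half x y : x = (y * RtoC (/2))%C -> Cmod x = Cmod y / 2.
Proof. intros ->. rewrite Cmod_mult, Cmod_R, Rabs_pos_eq by lra. unfold Rdiv. reflexivity. Qed.

Lemma Per_sub t : Per (sub1 t) = Per t / 2 /\ Per (sub2 t) = Per t / 2 /\ Per (sub3 t) = Per t / 2 /\ Per (sub4 t) = Per t / 2.
Proof.
  destruct t as [[a b] c]. simpl.
  rewrite (Cmod_half ((a + b) / 2 - a) (b - a)) by Ceq.
  rewrite (Cmod_half ((c + a) / 2 - (a + b) / 2) (c - b)) by Ceq.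
  rewrite (Cmod_half (a - (c + a) / 2) (a - c)) by Ceq.
  rewrite (Cmod_half (b - (a + b) / 2) (b - a)) by Ceq.
  rewrite (Cmod_half ((b + c) / 2 - b) (c - b)) by Ceq.
  rewrite (Cmod_half ((a + b) / 2 - (b + c) / 2) (a - c)) by Ceq.
  rewrite (Cmod_half ((b + c) / 2 - (c + a) / 2) (b - a)) by Ceq.
  rewrite (Cmod_half (c - (b + c) / 2) (c - b)) by Ceq.
  rewrite (Cmod_half ((c + a) / 2 - c) (a - c)) by Ceq.
  rewrite (Cmod_half ((c + a) / 2 - (b + c) / 2) (a - b)) by Ceq.
  replace (Cmod (a - b)) with (Cmod (b - a)).
  2:{ replace (a - b)%C with (- (b - a))%C by Ceqr. rewrite Cmod_opp. reflexivity. }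
  rewrite (Cmod_half ((b + c) / 2 - (a + b) / 2) (- (a - c))) by Ceq.
  rewrite (Cmod_half ((a + b) / 2 - (c + a) / 2) (- (c - b))) by Ceq.
  rewrite !Cmod_opp.
  repeat split; field.
Qed.

Lemma best2_ge u x y : Cmod (T3 u x) <= Cmod (T3 u (best2 u x y)) /\ Cmod (T3 u y) <= Cmod (T3 u (best2 u x y)).
Proof. unfold best2. destruct (Rle_dec _ _); lra. Qed.

Lemma best2_or u x y : best2 u x y = x \/ best2 u x y = y.
Proof. unfold best2. destruct (Rle_dec _ _); auto. Qed.

Lemma step_or u t : step u t = sub1 t \/ step u t = sub2 t \/ step u t = sub3 t \/ step u t = sub4 t.
Proof.
  unfold step. destruct (best2_or u (best2 u (sub1 t) (sub2 t)) (best2 u (sub3 t) (sub4 t))) as [-> | ->];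
  [destruct (best2_or u (sub1 t) (sub2 t)) as [-> | ->] | destruct (best2_or u (sub3 t) (sub4 t)) as [-> | ->]]; tauto.
Qed.

Lemma step_ge u rho t : rho < 1 -> (forall w, Cmod w < 1 -> Ccont u w) -> InB rho t ->
  Cmod (T3 u t) <= 4 * Cmod (T3 u (step u t)).
Proof.
  intros Hr Hc Hb. rewrite (T3_decomp u rho t Hr Hc Hb).
  unfold step.
  destruct (best2_ge u (sub1 t) (sub2 t)) as [A1 A2].
  destruct (best2_ge u (sub3 t) (sub4 t)) as [A3 A4].
  destruct (best2_ge u (best2 u (sub1 t) (sub2 t)) (best2 u (sub3 t) (sub4 t))) as [B1 B2].
  eapply Rle_trans. apply Cmod_triangle.
  eapply Rle_trans. apply Rplus_le_compat_r. apply Cmod_triangle.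
  eapply Rle_trans. apply Rplus_le_compat_r. apply Rplus_le_compat_r. apply Cmod_triangle.
  lra.
Qed.

Lemma step_InB u rho t : InB rho t -> InB rho (step u t).
Proof. intros H. destruct (InB_sub rho t H) as [? [? [? ?]]]. destruct (step_or u t) as [-> | [-> | [-> | ->]]]; auto. Qed.

Lemma step_Per u t : Per (step u t) = Per t / 2.
Proof. destruct (Per_sub t) as [? [? [? ?]]]. destruct (step_or u t) as [-> | [-> | [-> | ->]]]; auto. Qed.

Lemma step_vA u t : Cmod (vA (step u t) - vA t) <= Per t.
Proof.
  destruct t as [[a b] c].
  assert (Hp : 0 <= Cmod (b - a) /\ 0 <= Cmod (c - b) /\ 0 <= Cmod (a - c)) by (repeat split; apply Cmod_ge_0).
  destruct (step_or u (a, b, c)) as [-> | [-> | [-> | ->]]]; simpl.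
  - replace (a - a)%C with (RtoC 0) by Ceqr. rewrite Cmod_0. lra.
  - rewrite (Cmod_half ((a + b) / 2 - a) (b - a)) by Ceq. lra.
  - rewrite (Cmod_half ((c + a) / 2 - a) (- (a - c))) by Ceq. rewrite Cmod_opp. lra.
  - rewrite (Cmod_half ((a + b) / 2 - a) (b - a)) by Ceq. lra.
Qed.

Lemma seg_near t s : 0 <= s <= 1 -> let '(a, b, c) := t in
  Cmod (seg a b s - a) <= Per t /\ Cmod (seg b c s - a) <= Per t /\ Cmod (seg c a s - a) <= Per t.
Proof.
  intros Hs. destruct t as [[a b] c]. simpl.
  assert (Hp : 0 <= Cmod (b - a) /\ 0 <= Cmod (c - b) /\ 0 <= Cmod (a - c)) by (repeat split; apply Cmod_ge_0).
  unfold seg. split; [|split].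
  - replace (a + RtoC s * (b - a) - a)%C with (RtoC s * (b - a))%C by Ceqr.
    rewrite Cmod_RtoC_mult, Rabs_pos_eq by lra. nra.
  - replace (b + RtoC s * (c - b) - a)%C with ((b - a) + RtoC s * (c - b))%C by Ceqr.
    eapply Rle_trans. apply Cmod_triangle. rewrite Cmod_RtoC_mult, Rabs_pos_eq by lra. nra.
  - replace (c + RtoC s * (a - c) - a)%C with (RtoC (1 - s) * (- (a - c)))%C by Ceqr.
    rewrite Cmod_RtoC_mult, Rabs_pos_eq, Cmod_opp by lra. nra.
Qed.

Lemma Ccont_minus u1 u2 z : Ccont u1 z -> Ccont u2 z -> Ccont (fun w => u1 w - u2 w)%C z.
Proof.
  intros H1 H2 eps He.
  destruct (H1 (eps/2)) as [d1 [Hd1 K1]]. lra. destruct (H2 (eps/2)) as [d2 [Hd2 K2]]. lra.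
  exists (Rmin d1 d2). split. apply Rmin_pos; auto.
  intros w Hw.
  specialize (K1 w (Rlt_le_trans _ _ _ Hw (Rmin_l _ _))).
  specialize (K2 w (Rlt_le_trans _ _ _ Hw (Rmin_r _ _))).
  replace (u1 w - u2 w - (u1 z - u2 z))%C with ((u1 w - u1 z) + - (u2 w - u2 z))%C by Ceqr.
  eapply Rle_lt_trans. apply Cmod_triangle. rewrite Cmod_opp. lra.
Qed.

Lemma Ccont_affine (al be z : C) : Ccont (fun w => al + be * w)%C z.
Proof.
  intros eps He. exists (eps / (Cmod be + 1)). split.
  apply Rdiv_lt_0_compat; auto. generalize (Cmod_ge_0 be); lra.
  intros w Hw.
  replace (al + be * w - (al + be * z))%C with (be * (w - z))%C by Ceqr.
  rewrite Cmod_mult.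
  assert (H0 := Cmod_ge_0 be). assert (H1 := Cmod_ge_0 (w - z)).
  apply Rle_lt_trans with ((Cmod be + 1) * Cmod (w - z)). nra.
  replace eps with ((Cmod be + 1) * (eps / (Cmod be + 1))) by (field; lra).
  apply Rmult_lt_compat_l; lra.
Qed.

Lemma im_le_Cmod' (x : C) : Rabs (snd x) <= Cmod x.
Proof.
  assert (H := re_le_Cmod (x * Ci)). rewrite re_mult_Ci, Cmod_mult, Cmod_Ci, Rmult_1_r, Rabs_Ropp in H.
  exact H.
Qed.

Lemma sqrt2_le_2 : sqrt 2 <= 2.
Proof. assert (H := sqrt_sqrt 2). assert (H0 := sqrt_pos 2). nra. Qed.

Lemma Cmod_le_comp (x : C) e : Rabs (fst x) <= e -> Rabs (snd x) <= e -> Cmod x <= 2 * e.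
Proof.
  intros H1 H2. eapply Rle_trans. apply Cmod_2Rmax.
  assert (Hm : Rmax (Rabs (fst x)) (Rabs (snd x)) <= e) by (apply Rmax_lub; auto).
  assert (H0 : 0 <= Rmax (Rabs (fst x)) (Rabs (snd x))) by (eapply Rle_trans; [apply Rabs_pos | apply Rmax_l]).
  assert (H3 := sqrt2_le_2). assert (H4 := sqrt_pos 2). nra.
Qed.

Lemma pow4_half n : 4 ^ n * ((/2) ^ n * (/2) ^ n) = 1.
Proof.
  rewrite <- !Rpow_mult_distr. replace (4 * (/2 * /2)) with 1 by field. apply pow1.
Qed.

Theorem goursat (u : C -> C) (rho : R) (t0 : tri) : rho < 1 ->
  (forall w, Cmod w < 1 -> exists l, Cder u w l) -> InB rho t0 -> T3 u t0 = 0%C.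
Proof.
  intros Hr Hd Hb0.
  assert (Hc : forall w, Cmod w < 1 -> Ccont u w).
  { intros w Hw. destruct (Hd w Hw) as [l Hl]. eapply Cder_Ccont; eauto. }
  set (tr := fun n => Nat.iter n (step u) t0).
  set (P := Per t0).
  assert (HP : 0 <= P).
  { unfold P. destruct t0 as [[a b] c]. simpl. generalize (Cmod_ge_0 (b - a)) (Cmod_ge_0 (c - b)) (Cmod_ge_0 (a - c)). lra. }
  assert (F1 : forall n, InB rho (tr n)).
  { induction n. exact Hb0. simpl. apply step_InB. exact IHn. }
  assert (F2 : forall n, Per (tr n) = P * (/2) ^ n).
  { induction n. simpl. unfold P. ring. simpl. fold (tr n). rewrite step_Per, IHn. field. }
  assert (F3 : forall n, Cmod (T3 u t0) <= 4 ^ n * Cmod (T3 u (tr n))).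
  { induction n. simpl. lra. simpl. fold (tr n).
    assert (H := step_ge u rho (tr n) Hr Hc (F1 n)). assert (0 <= 4 ^ n) by (apply pow_le; lra). nra. }
  assert (F4 : forall n k, Cmod (vA (tr (n + k)%nat) - vA (tr n)) <= 2 * P * (/2) ^ n - 2 * P * (/2) ^ (n + k)).
  { intros n. induction k.
    - rewrite Nat.add_0_r. replace (vA (tr n) - vA (tr n))%C with (RtoC 0) by Ceqr. rewrite Cmod_0. lra.
    - replace (n + S k)%nat with (S (n + k)) by lia.
      replace (vA (tr (S (n + k)%nat)) - vA (tr n))%C with ((vA (tr (S (n + k)%nat)) - vA (tr (n + k)%nat)) + (vA (tr (n + k)%nat) - vA (tr n)))%C by Ceqr.
      eapply Rle_trans. apply Cmod_triangle.
      assert (H := step_vA u (tr (n + k)%nat)). simpl in H |- *. fold (tr (n + k)%nat) in H |- *.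
      rewrite F2 in H. lra. }
  assert (F4' : forall n m, (n <= m)%nat -> Cmod (vA (tr m) - vA (tr n)) <= 2 * P * (/2) ^ n).
  { intros n m Hnm. replace m with (n + (m - n))%nat by lia.
    eapply Rle_trans. apply F4. assert (0 <= (/2) ^ (n + (m - n))) by (apply pow_le; lra). nra. }
  assert (Hsm : forall eps, 0 < eps -> exists N, 2 * P * (/2) ^ N < eps).
  { intros eps He. apply small_pow; auto. }
  destruct (cauchy_lim (fun n => fst (vA (tr n))) (fun n => 2 * P * (/2) ^ n)) as [Lx HLx]; auto.
  { intros n m Hnm. eapply Rle_trans. 2: apply (F4' n m Hnm).
    eapply Rle_trans. 2: apply re_le_Cmod. simpl. apply Req_le. reflexivity. }
  destruct (cauchy_lim (fun n => snd (vA (tr n))) (fun n => 2 * P * (/2) ^ n)) as [Ly HLy]; auto.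
  { intros n m Hnm. eapply Rle_trans. 2: apply (F4' n m Hnm).
    eapply Rle_trans. 2: apply im_le_Cmod'. simpl. apply Req_le. reflexivity. }
  set (zs := (Lx, Ly) : C).
  assert (F5 : forall n, Cmod (zs - vA (tr n)) <= 4 * P * (/2) ^ n).
  { intros n. replace (4 * P * (/2) ^ n) with (2 * (2 * P * (/2) ^ n)) by ring.
    apply Cmod_le_comp; simpl. apply HLx. apply HLy. }
  destruct (small_pow (4 * P) (1 - rho)) as [n0 Hn0]. lra.
  assert (Hzs : Cmod zs < 1).
  { assert (H := F5 n0).
    assert (Ha : Cmod (vA (tr n0)) <= rho) by (generalize (F1 n0); destruct (tr n0) as [[a b] c]; simpl; tauto).
    replace zs with ((zs - vA (tr n0)) + vA (tr n0))%C by Ceqr.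
    eapply Rle_lt_trans. apply Cmod_triangle. lra. }
  destruct (Hd zs Hzs) as [ls Hls].
  destruct (Req_dec (Cmod (T3 u t0)) 0) as [E0 | E0].
  { apply Cmod_eq_0. exact E0. }
  exfalso.
  set (N0 := Cmod (T3 u t0)) in *.
  assert (HN0 : 0 < N0) by (generalize (Cmod_ge_0 (T3 u t0)); unfold N0 in *; lra).
  set (eps := N0 / (10 * P ^ 2 + 10)).
  assert (Heps : 0 < eps) by (unfold eps; apply Rdiv_lt_0_compat; nra).
  destruct (Cder_elim _ _ _ Hls eps Heps) as [del [Hdel Hder]].
  destruct (small_pow (5 * P) del Hdel) as [n Hn].
  set (al := (u zs - zs * ls)%C).
  set (aff := fun w => (al + ls * w)%C).
  set (vv := fun w => (u w - aff w)%C).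
  set (q := (/2) ^ n).
  assert (Hq : 0 <= q) by (apply pow_le; lra).
  assert (Hvv : forall w, Cmod w < 1 -> Ccont vv w).
  { intros w Hw. apply Ccont_minus. apply Hc, Hw. apply Ccont_affine. }
  assert (Haff : forall w, Ccont aff w) by (intros w; apply Ccont_affine).
  assert (HT := F3 n). fold N0 in HT.
  assert (HB := F1 n). assert (HPn := F2 n). assert (HA := F5 n).
  fold q in HPn, HA.
  destruct (tr n) as [[a b] c]. simpl in HB, HPn, HA. destruct HB as [Ha [Hb Hcc]].
  assert (Hpt : forall w, Cmod (w - a) <= P * q -> Cmod (vv w) <= eps * (5 * P * q)).
  { intros w Hw.
    assert (Hwz : Cmod (w - zs) <= 5 * P * q).
    { replace (w - zs)%C with ((w - a) + - (zs - a))%C by Ceqr.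
      eapply Rle_trans. apply Cmod_triangle. rewrite Cmod_opp. lra. }
    replace (vv w) with (u w - u zs - (w - zs) * ls)%C by (unfold vv, aff, al; Ceqr).
    eapply Rle_trans. apply Hder. unfold q in Hwz; lra.
    apply Rmult_le_compat_l; lra. }
  assert (Hside : forall p r, Cmod p <= rho -> Cmod r <= rho ->
     (forall s, 0 <= s <= 1 -> Cmod (seg p r s - a) <= P * q) ->
     Ig u p r = (Ig vv p r + Ig aff p r)%C /\ Cmod (Ig vv p r) <= Cmod (r - p) * (eps * (5 * P * q))).
  { intros p r Hp Hr' Hs.
    assert (S1 : SegCont u p r) by (apply (Ccont_SegCont u p r rho Hr Hc Hp Hr')).
    assert (S2 : SegCont aff p r) by (intros s Hs'; apply Haff).
    assert (S3 : SegCont vv p r) by (apply (Ccont_SegCont vv p r rho Hr Hvv Hp Hr')).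
    split.
    - assert (E := Ig_minus u aff p r S1 S2). fold vv in E. rewrite E. Ceqr.
    - apply Ig_bound. exact S3.
      intros s Hs'. apply Hpt. apply Hs, Hs'. }
  assert (Hsn := fun s Hs => seg_near (a, b, c) s Hs). simpl in Hsn. rewrite HPn in Hsn.
  destruct (Hside a b Ha Hb (fun s Hs => proj1 (Hsn s Hs))) as [E1 B1].
  destruct (Hside b c Hb Hcc (fun s Hs => proj1 (proj2 (Hsn s Hs)))) as [E2 B2].
  destruct (Hside c a Hcc Ha (fun s Hs => proj2 (proj2 (Hsn s Hs)))) as [E3 B3].
  assert (HT3 : T3 u (a, b, c) = (Ig vv a b + Ig vv b c + Ig vv c a)%C).
  { simpl. rewrite E1, E2, E3. unfold aff. rewrite !Ig_affine. Ceq. }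
  rewrite HT3 in HT.
  assert (HT' : Cmod (Ig vv a b + Ig vv b c + Ig vv c a) <= P * q * (eps * (5 * P * q))).
  { eapply Rle_trans. apply Cmod_triangle. eapply Rle_trans. apply Rplus_le_compat_r. apply Cmod_triangle.
    rewrite <- HPn. nra. }
  assert (H4 := pow4_half n). fold q in H4.
  assert (H4n : 0 <= 4 ^ n) by (apply pow_le; lra).
  assert (HN : N0 <= 5 * eps * P ^ 2).
  { eapply Rle_trans. exact HT.
    replace (5 * eps * P ^ 2) with (4 ^ n * (P * q * (eps * (5 * P * q)))).
    apply Rmult_le_compat_l; auto. 
    replace (4 ^ n * (P * q * (eps * (5 * P * q)))) with ((4 ^ n * (q * q)) * (5 * eps * P ^ 2)) by ring.
    rewrite H4. ring. }
  assert (Heq : eps * (10 * P ^ 2 + 10) = N0) by (unfold eps; field; nra).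
  nra.
Qed.

Lemma Cder_inv (z : C) : z <> 0%C -> Cder Cinv z (- / (z * z))%C.
Proof.
  intros Hz. apply Cder_intro. intros eps He.
  assert (Hm : 0 < Cmod z) by (apply Cmod_gt_0; auto).
  exists (Rmin (Cmod z / 2) (eps * (Cmod z) ^ 3 / 2)). split.
  apply Rmin_pos. lra. apply Rdiv_lt_0_compat; [|lra]. apply Rmult_lt_0_compat; auto. apply pow_lt; auto.
  intros w Hw.
  assert (Hw1 : Cmod (w - z) < Cmod z / 2) by (eapply Rlt_le_trans; [exact Hw | apply Rmin_l]).
  assert (Hw2 : Cmod (w - z) < eps * (Cmod z) ^ 3 / 2) by (eapply Rlt_le_trans; [exact Hw | apply Rmin_r]).
  assert (Hwm : Cmod z / 2 <= Cmod w).
  { assert (Ht : Cmod z <= Cmod w + Cmod (w - z)).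
    { replace z with (w + - (w - z))%C at 1 by Ceqr. rewrite <- (Cmod_opp (w - z)). apply Cmod_triangle. }
    lra. }
  assert (Hw0 : w <> 0%C) by (intro E; subst w; rewrite Cmod_0 in Hwm; lra).
  replace (/ w - / z - (w - z) * - / (z * z))%C with ((w - z) * (w - z) * / (w * (z * z)))%C.
  2:{ field. auto. }
  rewrite !Cmod_mult, Cmod_inv, !Cmod_mult.
  2:{ apply Cmult_neq_0; auto. apply Cmult_neq_0; auto. }
  assert (H0 := Cmod_ge_0 (w - z)).
  rewrite Rmult_assoc. rewrite (Rmult_comm eps). apply Rmult_le_compat_l; auto.
  apply Rle_trans with (Cmod (w - z) * / (Cmod z / 2 * (Cmod z * Cmod z))).
  apply Rmult_le_compat_l; auto. apply Rinv_le_contravar. 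
  apply Rmult_lt_0_compat; [lra | nra]. apply Rmult_le_compat_r; nra.
  apply Rle_trans with (eps * (Cmod z) ^ 3 / 2 * / (Cmod z / 2 * (Cmod z * Cmod z))).
  apply Rmult_le_compat_r. left. apply Rinv_0_lt_compat. apply Rmult_lt_0_compat; [lra|nra]. lra.
  right. field. lra.
Qed.

Lemma Cder_affine (al be z : C) : Cder (fun w => al + be * w)%C z be.
Proof.
  apply Cder_intro. intros eps He. exists 1. split. lra. intros w _.
  replace (al + be * w - (al + be * z) - (w - z) * be)%C with (RtoC 0) by Ceqr.
  rewrite Cmod_0. generalize (Cmod_ge_0 (w - z)); nra.
Qed.

Lemma Cder_abs (h : C -> C) z l : Cder h z l -> is_derive (K:=C_AbsRing) (V:=AbsRing_NormedModule C_AbsRing) h z l.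
Proof.
  intros H. assert (H' := Cder_elim _ _ _ H). split.
  - apply is_linear_scal_l.
  - intros x Hx.
    assert (E : z = x) by (apply (is_filter_lim_locally_unique (K:=C_AbsRing) (V:=AbsRing_NormedModule C_AbsRing)); exact Hx).
    subst x. intros eps.
    apply locally_Cmod'.
    destruct (H' eps (cond_pos eps)) as [del [Hd Hw]].
    exists del. split; auto.
Qed.

Lemma abs_Cder (h : C -> C) z l : is_derive (K:=C_AbsRing) (V:=AbsRing_NormedModule C_AbsRing) h z l -> Cder h z l.
Proof.
  intros [_ H]. apply Cder_intro. intros eps He.
  assert (Hz : @is_filter_lim (AbsRing_NormedModule C_AbsRing) (@locally (AbsRing_UniformSpace C_AbsRing) z) z) by (intros P HP; exact HP).
  specialize (H z Hz (mkposreal eps He)).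
  apply locally_Cmod' in H. exact H.
Qed.

Lemma Cder_comp (f h : C -> C) z df dh : Cder f (h z) df -> Cder h z dh -> Cder (fun x => f (h x)) z (dh * df)%C.
Proof. intros H1 H2. exact (is_derive_comp (K:=C_AbsRing) (V:=C_NormedModule) f h z df dh H1 (Cder_abs _ _ _ H2)). Qed.

Lemma Cder_mult (f h : C -> C) z df dh : Cder f z df -> Cder h z dh -> Cder (fun x => f x * h x)%C z (df * h z + f z * dh)%C.
Proof. intros H1 H2. apply abs_Cder. exact (is_derive_mult (K:=C_AbsRing) f h z df dh (Cder_abs _ _ _ H1) (Cder_abs _ _ _ H2) Cmult_comm). Qed.

Lemma Cder_ext_loc (f h : C -> C) z l : (exists del, 0 < del /\ forall w, Cmod (w - z) < del -> f w = h w) ->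
  Cder f z l -> Cder h z l.
Proof.
  intros Hl H. apply (is_derive_ext_loc (K:=C_AbsRing) (V:=C_NormedModule) f h z l).
  apply locally_Cmod'. exact Hl. exact H.
Qed.

Lemma Cder_const (a z : C) : Cder (fun _ => a) z 0%C.
Proof.
  apply Cder_intro. intros eps He. exists 1. split. lra. intros w _.
  replace (a - a - (w - z) * 0)%C with (RtoC 0) by Ceqr.
  rewrite Cmod_0. generalize (Cmod_ge_0 (w - z)); nra.
Qed.

Lemma Cder_val (f : C -> C) z l1 l2 : l1 = l2 -> Cder f z l1 -> Cder f z l2.
Proof. intros ->; auto. Qed.

Lemma Cder_scal (a : C) (f : C -> C) z l : Cder f z l -> Cder (fun w => a * f w)%C z (a * l)%C.
Proof.
  intros H. eapply Cder_val. 2: apply (Cder_mult (fun _ => a) f z 0%C l (Cder_const a z) H). Ceqr.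
Qed.

Definition ucomp (t : R) (g : C -> C) (w : C) : C := (g w / (1 - RtoC t * w))%C.

Lemma den_bound (t : R) (w : C) : 0 <= t -> 1 - t * Cmod w <= Cmod (1 - RtoC t * w).
Proof.
  intros Ht.
  assert (H : Cmod 1 <= Cmod (1 - RtoC t * w) + Cmod (RtoC t * w)).
  { replace (RtoC 1) with ((1 - RtoC t * w) + RtoC t * w)%C at 1 by Ceqr. apply Cmod_triangle. }
  rewrite Cmod_1, Cmod_RtoC_mult, Rabs_pos_eq in H by lra. lra.
Qed.

Lemma den_nz (t : R) (w : C) : 0 <= t < 1 -> Cmod w <= 1 -> (1 - RtoC t * w)%C <> 0%C.
Proof.
  intros Ht Hw E. assert (H := den_bound t w (proj1 Ht)). rewrite E, Cmod_0 in H.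
  assert (t * Cmod w <= t * 1) by (apply Rmult_le_compat_l; lra). lra.
Qed.

Lemma Cder_u t g w lg : 0 <= t < 1 -> Cmod w < 1 -> Cder g w lg -> exists l, Cder (ucomp t g) w l.
Proof.
  intros Ht Hw Hg.
  assert (Hnz : (1 - RtoC t * w)%C <> 0%C) by (apply den_nz; lra).
  assert (H1 : Cder (fun x => 1 - RtoC t * x)%C w (- RtoC t)%C).
  { eapply Cder_ext_loc. 2: apply (Cder_affine 1 (- RtoC t) w). exists 1. split. lra. intros; Ceqr. }
  assert (H2 := Cder_comp Cinv (fun x => 1 - RtoC t * x)%C w _ _ (Cder_inv _ Hnz) H1).
  assert (H3 := Cder_mult g _ w _ _ Hg H2).
  eexists. eapply Cder_ext_loc. 2: exact H3. exists 1. split. lra. intros; reflexivity.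
Qed.

Lemma P_der (u : C -> C) (z0 : C) : (forall w, Cmod w < 1 -> exists l, Cder u w l) -> Cmod z0 < 1 ->
  Cder (fun z => Ig u 0 z) z0 (u z0).
Proof.
  intros Hd Hz0.
  assert (Hc : forall w, Cmod w < 1 -> Ccont u w).
  { intros w Hw. destruct (Hd w Hw) as [l Hl]. eapply Cder_Ccont; eauto. }
  apply Cder_intro. intros eps He.
  destruct (Hc z0 Hz0 eps He) as [dc [Hdc Hcc]].
  exists (Rmin dc (1 - Cmod z0)). split. apply Rmin_pos; lra.
  intros w Hw.
  assert (Hw1 : Cmod (w - z0) < dc) by (eapply Rlt_le_trans; [exact Hw | apply Rmin_l]).
  assert (Hw2 : Cmod (w - z0) < 1 - Cmod z0) by (eapply Rlt_le_trans; [exact Hw | apply Rmin_r]).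
  assert (Hwm : Cmod w < 1).
  { assert (Ht : Cmod w <= Cmod z0 + Cmod (w - z0)).
    { replace w with (z0 + (w - z0))%C at 1 by Ceqr. apply Cmod_triangle. }
    lra. }
  set (rho := Rmax (Cmod z0) (Cmod w)).
  assert (Hr : rho < 1) by (unfold rho; apply Rmax_lub_lt; auto).
  assert (Hr0 : Cmod z0 <= rho) by apply Rmax_l.
  assert (Hr1 : Cmod w <= rho) by apply Rmax_r.
  assert (H00 : Cmod 0 <= rho) by (rewrite Cmod_0; eapply Rle_trans; [apply Cmod_ge_0 | exact Hr0]).
  assert (HG := goursat u rho (RtoC 0, z0, w) Hr Hd (conj H00 (conj Hr0 Hr1))).
  simpl in HG.
  rewrite (Ig_rev u 0 w) in HG by (eapply Ccont_SegCont; eauto).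
  assert (E : (Ig u 0 w - Ig u 0 z0)%C = Ig u z0 w).
  { replace (Ig u z0 w) with ((Ig u 0 z0 + Ig u z0 w + - Ig u 0 w) + (Ig u 0 w - Ig u 0 z0))%C by Ceqr.
    rewrite HG. Ceqr. }
  rewrite E.
  assert (S1 : SegCont u z0 w) by (eapply Ccont_SegCont; eauto).
  assert (S2 : SegCont (fun x => u z0 + 0 * x)%C z0 w) by (intros s _; apply Ccont_affine).
  assert (E2 := Ig_minus u (fun x => u z0 + 0 * x)%C z0 w S1 S2).
  rewrite Ig_affine in E2.
  replace (Ig u z0 w - (w - z0) * u z0)%C with (Ig (fun x => u x - (u z0 + 0 * x)) z0 w)%C.
  2:{ rewrite E2. Ceqr. }
  rewrite Rmult_comm. apply Ig_bound.
  - intros s Hs. apply Ccont_minus. apply S1, Hs. apply Ccont_affine.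
  - intros s Hs. replace (u (seg z0 w s) - (u z0 + 0 * seg z0 w s))%C with (u (seg z0 w s) - u z0)%C by Ceqr.
    apply Rlt_le, Hcc.
    replace (seg z0 w s - z0)%C with (RtoC s * (w - z0))%C by (unfold seg; Ceqr).
    rewrite Cmod_RtoC_mult, Rabs_pos_eq by lra.
    assert (0 <= Cmod (w - z0)) by apply Cmod_ge_0. nra.
Qed.

Lemma Ces_nz t g w : Cmod w < 1 -> w <> 0%C -> Ces t g w = (/ w * Ig (ucomp t g) 0 w)%C.
Proof.
  intros Hw Hn. unfold Ces.
  destruct (Rlt_dec (Cmod w) 1) as [_ | C1]; [| lra].
  destruct (Req_EM_T (Cmod w) 0) as [E | _].
  { exfalso. apply Hn, Cmod_eq_0, E. }
  f_equal. unfold Ig, CI. f_equal. apply functional_extensionality. intros s.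
  unfold seg, ucomp. replace (0 + RtoC s * (w - 0))%C with (RtoC s * w)%C by Ceqr.
  replace (w - 0)%C with w by Ceqr. reflexivity.
Qed.

Lemma Ces_0 t g : Ces t g 0%C = g 0%C.
Proof.
  unfold Ces. rewrite Cmod_0.
  destruct (Rlt_dec 0 1) as [_ | C1]; [| lra].
  destruct (Req_EM_T 0 0) as [_ | C2]; [reflexivity | lra].
Qed.

Lemma Ces_out t g w : ~ Cmod w < 1 -> Ces t g w = 0%C.
Proof. intros H. unfold Ces. destruct (Rlt_dec (Cmod w) 1); [contradiction | reflexivity]. Qed.

Lemma ucomp_0 t g : ucomp t g 0%C = g 0%C.
Proof. unfold ucomp. generalize (g 0%C). intros c. Ceq. Qed.

Theorem Ces_holD (t : R) (g : C -> C) : 0 <= t < 1 -> holD g -> holD (Ces t g).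
Proof.
  intros Ht [Hg Hg0]. split.
  2:{ intros z Hz. apply Ces_out. exact Hz. }
  intros z Hz. unfold inD in Hz.
  set (u := ucomp t g).
  assert (Hd : forall w, Cmod w < 1 -> exists l, Cder u w l).
  { intros w Hw. destruct (Hg w Hw) as [lg Hlg]. eapply Cder_u; eauto. }
  assert (Hc : forall w, Cmod w < 1 -> Ccont u w).
  { intros w Hw. destruct (Hd w Hw) as [l Hl]. eapply Cder_Ccont; eauto. }
  destruct (Ceq_dec z 0) as [Ez | Nz].
  - subst z. destruct (Hd 0%C Hz) as [ud Hud].
    exists (ud / 2)%C. apply Cder_intro. intros eps He.
    destruct (Cder_elim _ _ _ Hud eps He) as [d1 [Hd1 H1]].
    exists (Rmin d1 1). split. apply Rmin_pos; lra.
    intros w Hw. replace (w - 0)%C with w in * by Ceqr.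
    assert (Hw1 : Cmod w < d1) by (eapply Rlt_le_trans; [exact Hw | apply Rmin_l]).
    assert (Hw2 : Cmod w < 1) by (eapply Rlt_le_trans; [exact Hw | apply Rmin_r]).
    destruct (Ceq_dec w 0) as [Ew | Nw].
    { subst w. replace (Ces t g 0 - Ces t g 0 - 0 * (ud / 2))%C with (RtoC 0) by Ceq. rewrite Cmod_0. lra. }
    rewrite Ces_nz, Ces_0 by auto. fold u.
    assert (Hwp : 0 < Cmod w) by (apply Cmod_gt_0; auto).
    assert (S1 : SegCont u 0 w) by (apply (Ccont_SegCont u 0 w (Cmod w) Hw2 Hc); [rewrite Cmod_0; lra | lra]).
    assert (S2 : SegCont (fun x => u 0 + ud * x)%C 0 w) by (intros s _; apply Ccont_affine).
    assert (E2 := Ig_minus u (fun x => u 0 + ud * x)%C 0 w S1 S2).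
    rewrite Ig_affine in E2.
    assert (B : Cmod (Ig (fun x => u x - (u 0 + ud * x)) 0 w)%C <= Cmod (w - 0) * (eps * Cmod w)).
    { apply Ig_bound.
      - intros s Hs. apply Ccont_minus. apply S1, Hs. apply Ccont_affine.
      - intros s Hs.
        assert (Hsm : Cmod (seg 0 w s) <= s * Cmod w).
        { unfold seg. replace (0 + RtoC s * (w - 0))%C with (RtoC s * w)%C by Ceqr.
          rewrite Cmod_RtoC_mult, Rabs_pos_eq by lra. lra. }
        assert (Hsw : s * Cmod w <= Cmod w) by nra.
        specialize (H1 (seg 0 w s)). replace (seg 0 w s - 0)%C with (seg 0 w s) in H1 by Ceqr.
        replace (u (seg 0 w s) - (u 0 + ud * seg 0 w s))%C with (u (seg 0 w s) - u 0 - seg 0 w s * ud)%C by Ceqr.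
        eapply Rle_trans. apply H1. lra. apply Rmult_le_compat_l; lra. }
    replace (w - 0)%C with w in B by Ceqr.
    replace (/ w * Ig u 0 w - g 0 - w * (ud / 2))%C with (/ w * Ig (fun x => u x - (u 0 + ud * x)) 0 w)%C.
    2:{ rewrite E2. unfold u. rewrite ucomp_0. field. auto. }
    rewrite Cmod_mult, Cmod_inv by auto.
    apply Rle_trans with (/ Cmod w * (Cmod w * (eps * Cmod w))).
    apply Rmult_le_compat_l. left. apply Rinv_0_lt_compat; auto. exact B.
    right. field. lra.
  - assert (Hzp : 0 < Cmod z) by (apply Cmod_gt_0; auto).
    exists (- / (z * z) * Ig u 0 z + / z * u z)%C.
    eapply Cder_ext_loc. 2: apply (Cder_mult Cinv (fun w => Ig u 0 w) z _ _ (Cder_inv z Nz) (P_der u z Hd Hz)).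
    exists (Rmin (Cmod z) (1 - Cmod z)). split. apply Rmin_pos; lra.
    intros w Hw.
    assert (Hw1 : Cmod (w - z) < Cmod z) by (eapply Rlt_le_trans; [exact Hw | apply Rmin_l]).
    assert (Hw2 : Cmod (w - z) < 1 - Cmod z) by (eapply Rlt_le_trans; [exact Hw | apply Rmin_r]).
    assert (Ht1 : Cmod z <= Cmod w + Cmod (w - z)).
    { replace z with (w + - (w - z))%C at 1 by Ceqr. rewrite <- (Cmod_opp (w - z)). apply Cmod_triangle. }
    assert (Ht2 : Cmod w <= Cmod z + Cmod (w - z)).
    { replace w with (z + (w - z))%C at 1 by Ceqr. apply Cmod_triangle. }
    symmetry. apply Ces_nz. lra.
    intros E. rewrite E in Hw1. replace (0 - z)%C with (- z)%C in Hw1 by Ceqr. rewrite Cmod_opp in Hw1. lra.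
Qed.

Lemma Rcont_lin u z s : Ccont u (RtoC s * z)%C -> Rcont (fun s => u (RtoC s * z)%C) s.
Proof.
  intros H eps He.
  destruct (H eps He) as [del [Hd Hw]].
  exists (del / (Cmod z + 1)). split. apply Rdiv_lt_0_compat; auto. generalize (Cmod_ge_0 z); lra.
  intros s' Hs'. apply Hw.
  replace (RtoC s' * z - RtoC s * z)%C with (RtoC (s' - s) * z)%C by Ceqr.
  rewrite Cmod_RtoC_mult.
  assert (H0 := Cmod_ge_0 z). assert (H1 := Rabs_pos (s' - s)).
  apply Rle_lt_trans with (Rabs (s' - s) * (Cmod z + 1)). nra.
  replace del with (del / (Cmod z + 1) * (Cmod z + 1)) by (field; lra).
  apply Rmult_lt_compat_r; lra.
Qed.

Lemma holD_Ccont g w : holD g -> Cmod w < 1 -> Ccont g w.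
Proof. intros [Hg _] Hw. destruct (Hg w Hw) as [l Hl]. eapply Cder_Ccont. exact Hl. Qed.

Lemma ucomp_Ccont t g w : 0 <= t < 1 -> holD g -> Cmod w < 1 -> Ccont (ucomp t g) w.
Proof.
  intros Ht [Hg _] Hw. destruct (Hg w Hw) as [l Hl].
  destruct (Cder_u t g w l Ht Hw Hl) as [l' Hl']. eapply Cder_Ccont. exact Hl'.
Qed.

Lemma Cmod_sz (s : R) (z : C) : 0 <= s <= 1 -> Cmod (RtoC s * z) <= Cmod z.
Proof.
  intros Hs. rewrite Cmod_RtoC_mult, Rabs_pos_eq by lra.
  assert (0 <= Cmod z) by apply Cmod_ge_0. nra.
Qed.

Lemma Ces_rep t g z : 0 <= t < 1 -> holD g -> Cmod z < 1 ->
  isCI (fun s => ucomp t g (RtoC s * z))%C 0 1 (Ces t g z).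
Proof.
  intros Ht Hg Hz.
  set (u := ucomp t g).
  assert (Hex : ex_RInt (V:=C_R_NormedModule) (fun s => u (RtoC s * z))%C 0 1).
  { apply ex_CI. intros s Hs. rewrite Rmin_left, Rmax_right in Hs by lra.
    apply Rcont_lin. apply ucomp_Ccont; auto. generalize (Cmod_sz s z Hs); lra. }
  destruct (Ceq_dec z 0) as [Ez | Nz].
  - subst z. rewrite Ces_0.
    eapply isCI_ext. 4: apply (isCI_const (g 0%C)). 2,3: reflexivity.
    intros s _. unfold u. rewrite Cmult_0_r. rewrite ucomp_0. reflexivity.
  - rewrite Ces_nz by auto. fold u.
    assert (HL := CI_correct _ _ _ Hex).
    set (L := CI (fun s => u (RtoC s * z))%C 0 1) in *.
    assert (E : Ig u 0 z = (z * L)%C).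
    { apply CI_unique. eapply isCI_ext. 4: apply (isCI_Cmult z _ _ _ _ HL). 2,3: reflexivity.
      intros s _. unfold seg. replace (0 + RtoC s * (z - 0))%C with (RtoC s * z)%C by Ceqr.
      replace (z - 0)%C with z by Ceqr. reflexivity. }
    rewrite E. replace (/ z * (z * L))%C with L by (field; auto). exact HL.
Qed.

Lemma ucomp_bound t g w B : 0 <= t < 1 -> Cmod w <= 1 -> Cmod (g w) <= B ->
  Cmod (ucomp t g w) <= B / (1 - t).
Proof.
  intros Ht Hw Hg. unfold ucomp, Cdiv.
  assert (Hnz := den_nz t w Ht Hw).
  assert (Hdb := den_bound t w (proj1 Ht)).
  assert (t * Cmod w <= t * 1) by (apply Rmult_le_compat_l; lra).
  rewrite Cmod_mult, Cmod_inv by auto.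
  unfold Rdiv. assert (0 <= Cmod (g w)) by apply Cmod_ge_0.
  apply Rmult_le_compat; auto. left. apply Rinv_0_lt_compat. apply Cmod_gt_0; auto.
  apply Rinv_le_contravar; lra.
Qed.

Lemma Ces_bound t g z B : 0 <= t < 1 -> holD g -> Cmod z < 1 ->
  (forall s, 0 <= s <= 1 -> Cmod (g (RtoC s * z)%C) <= B) -> Cmod (Ces t g z) <= B / (1 - t).
Proof.
  intros Ht Hg Hz Hb. apply (isCI_bound _ _ _ (fun s Hs => ucomp_bound t g _ B Ht
    (Rle_trans _ _ _ (Cmod_sz s z Hs) (Rlt_le _ _ Hz)) (Hb s Hs)) (Ces_rep t g z Ht Hg Hz)).
Qed.

Lemma Ces_diff t g h z B : 0 <= t < 1 -> holD g -> holD h -> Cmod z < 1 ->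
  (forall s, 0 <= s <= 1 -> Cmod (g (RtoC s * z)%C - h (RtoC s * z)%C) <= B) ->
  Cmod (Ces t g z - Ces t h z) <= B / (1 - t).
Proof.
  intros Ht Hg Hh Hz Hb.
  assert (H := isCI_minus _ _ _ _ _ _ (Ces_rep t g z Ht Hg Hz) (Ces_rep t h z Ht Hh Hz)).
  eapply isCI_bound. 2: exact H. intros s Hs.
  assert (E : (ucomp t g (RtoC s * z) - ucomp t h (RtoC s * z))%C = ucomp t (fun w => g w - h w)%C (RtoC s * z)%C).
  { unfold ucomp. assert (Hnz := den_nz t (RtoC s * z)%C Ht (Rle_trans _ _ _ (Cmod_sz s z Hs) (Rlt_le _ _ Hz))).
    field. auto. }
  simpl. rewrite E. apply ucomp_bound; auto.
  apply (Rle_trans _ _ _ (Cmod_sz s z Hs) (Rlt_le _ _ Hz)).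
Qed.

Lemma Cmod_lt_comp (x : C) e : Rabs (fst x) < e -> Rabs (snd x) < e -> Cmod x < 2 * e.
Proof.
  intros H1 H2. eapply Rle_lt_trans. apply Cmod_2Rmax.
  assert (Hm : Rmax (Rabs (fst x)) (Rabs (snd x)) < e) by (apply Rmax_lub_lt; auto).
  assert (H0 : 0 <= Rmax (Rabs (fst x)) (Rabs (snd x))) by (eapply Rle_trans; [apply Rabs_pos | apply Rmax_l]).
  assert (H3 := sqrt2_le_2). assert (H4 := sqrt_pos 2). nra.
Qed.

Lemma unif_disc (g : C -> C) (r : R) : 0 <= r < 1 -> (forall w, Cmod w < 1 -> Ccont g w) ->
  forall eps, 0 < eps -> exists d, 0 < d /\ forall w w', Cmod w <= r -> Cmod (w' - w) < d ->
    Cmod (g w' - g w) < eps.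
Proof.
  intros Hr Hc eps He.
  assert (Hex : forall p : C, exists d, 0 < d /\ (Cmod p <= r -> forall w, Cmod (w - p) < d -> Cmod (g w - g p) < eps / 2)).
  { intros p. destruct (Rle_dec (Cmod p) r) as [Hp | Hp].
    - destruct (Hc p ltac:(lra) (eps / 2) ltac:(lra)) as [d [Hd Hw]]. exists d. auto.
    - exists 1. split. lra. intros; contradiction. }
  set (ds := fun p => proj1_sig (constructive_indefinite_description _ (Hex p))).
  assert (Hds : forall p, 0 < ds p /\ (Cmod p <= r -> forall w, Cmod (w - p) < ds p -> Cmod (g w - g p) < eps / 2)).
  { intros p. unfold ds. destruct (constructive_indefinite_description _ (Hex p)) as [x Hx]. simpl. exact Hx. }
  set (D := fun p : C => if Rle_dec (Cmod p) r then ds p / 4 else (Cmod p - r) / 2).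
  assert (HD : forall p, 0 < D p).
  { intros p. unfold D. destruct (Rle_dec (Cmod p) r). destruct (Hds p). lra. lra. }
  set (delta := fun x y => mkposreal (D (x, y)) (HD (x, y))).
  destruct (compactness_value_2d (-1) 1 (-1) 1 delta) as [d Hd].
  exists d. split. apply cond_pos.
  intros w w' Hw Hww.
  assert (Hw1 := re_le_Cmod w). assert (Hw2 := im_le_Cmod' w).
  unfold Re in Hw1.
  assert (Hx : -1 <= fst w <= 1) by (apply Rabs_le_between; lra).
  assert (Hy : -1 <= snd w <= 1) by (apply Rabs_le_between; lra).
  apply NNPP. intros Hneg.
  apply (Hd (fst w) (snd w) Hx Hy). intros [u [v [_ [_ [Hu [Hv Hdd]]]]]].
  apply Hneg.
  simpl in Hu, Hv, Hdd.
  set (p := (u, v) : C) in *.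
  assert (Hwp : Cmod (w - p) < 2 * D p).
  { apply Cmod_lt_comp; simpl. unfold p in *. simpl. replace (fst w + - u) with (fst w - u) by ring. exact Hu.
    unfold p in *. simpl. replace (snd w + - v) with (snd w - v) by ring. exact Hv. }
  assert (Htri : Cmod p <= Cmod w + Cmod (w - p)).
  { replace p with (w + - (w - p))%C at 1 by Ceqr. rewrite <- (Cmod_opp (w - p)). apply Cmod_triangle. }
  unfold D in Hwp, Hdd. destruct (Rle_dec (Cmod p) r) as [Hp | Hp].
  2:{ exfalso. lra. }
  destruct (Hds p) as [Hdp Hg].
  assert (Hw'p : Cmod (w' - p) < ds p).
  { replace (w' - p)%C with ((w' - w) + (w - p))%C by Ceqr.
    eapply Rle_lt_trans. apply Cmod_triangle. lra. }
  assert (A1 := Hg Hp w ltac:(lra)). assert (A2 := Hg Hp w' Hw'p).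
  replace (g w' - g w)%C with ((g w' - g p) + - (g w - g p))%C by Ceqr.
  eapply Rle_lt_trans. apply Cmod_triangle. rewrite Cmod_opp. lra.
Qed.

Definition dil (rho : R) (f : C -> C) : C -> C := fun z => if Rlt_dec (Cmod z) 1 then f (RtoC rho * z)%C else 0%C.

Lemma holD_dil rho f : 0 <= rho <= 1 -> holD f -> holD (dil rho f).
Proof.
  intros Hr [Hf Hf0]. split.
  - intros z Hz. unfold inD in Hz.
    assert (Hrz : Cmod (RtoC rho * z) < 1).
    { rewrite Cmod_RtoC_mult, Rabs_pos_eq by lra. assert (0 <= Cmod z) by apply Cmod_ge_0. nra. }
    destruct (Hf _ Hrz) as [lf Hlf].
    assert (H1 : Cder (fun x => RtoC rho * x)%C z (RtoC rho)).
    { eapply Cder_ext_loc. 2: apply (Cder_affine 0 (RtoC rho) z). exists 1. split. lra. intros; Ceqr. }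
    assert (H2 := Cder_comp f _ z _ _ Hlf H1).
    eexists. eapply Cder_ext_loc. 2: exact H2.
    exists (1 - Cmod z). split. lra. intros w Hw. unfold dil.
    destruct (Rlt_dec (Cmod w) 1) as [_ | C1]. reflexivity.
    exfalso. apply C1.
    assert (Ht : Cmod w <= Cmod z + Cmod (w - z)).
    { replace w with (z + (w - z))%C at 1 by Ceqr. apply Cmod_triangle. }
    lra.
  - intros z Hz. unfold dil. destruct (Rlt_dec (Cmod z) 1); [contradiction | reflexivity].
Qed.

Lemma holD_scal a h : holD h -> holD (fscal a h).
Proof.
  intros [Hh Hh0]. split.
  - intros z Hz. destruct (Hh z Hz) as [l Hl]. exists (a * l)%C. apply (Cder_scal a h z l Hl).
  - intros z Hz. unfold fscal. rewrite Hh0 by auto. apply Cmult_0_r.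
Qed.

Lemma wbound_scal v a h K : is_weight v -> wbound v h K -> wbound v (fscal a h) (Cmod a * K).
Proof.
  intros [_ [_ Hp]] Hb z Hz. unfold fscal. rewrite Cmod_mult, Rmult_assoc.
  apply Rmult_le_compat_l. apply Cmod_ge_0. apply Hb, Hz.
Qed.

Lemma v_small v : filterlim v (at_left 1) (locally 0) ->
  forall e, 0 < e -> exists r0, r0 < 1 /\ forall x, r0 < x < 1 -> Rabs (v x) < e.
Proof.
  intros Hv e He.
  apply filterlim_locally with (eps := mkposreal e He) in Hv.
  destruct Hv as [d Hd].
  exists (1 - d). split. generalize (cond_pos d); lra.
  intros x Hx. specialize (Hd x).
  assert (Hb : ball 1 d x).
  { apply (norm_compat1 (K:=R_AbsRing) (V:=R_NormedModule)). change (Rabs (x - 1) < d).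
    rewrite Rabs_left1 by lra. lra. }
  specialize (Hd Hb (proj2 Hx)).
  change (Rabs (v x - 0) < e) in Hd. rewrite Rminus_0_r in Hd. exact Hd.
Qed.

Lemma H0_of_bounded v h M : is_weight v -> filterlim v (at_left 1) (locally 0) -> holD h ->
  (forall z, Cmod z < 1 -> Cmod (h z) <= M) -> H0 v h.
Proof.
  intros [_ [_ Hp]] Hv Hh Hb. split. exact Hh.
  intros eps He.
  set (M' := Rmax M 1).
  assert (HM' : 0 < M') by (unfold M'; generalize (Rmax_r M 1); lra).
  destruct (v_small v Hv (eps / M')) as [r0 [Hr0 Hs]]. apply Rdiv_lt_0_compat; auto.
  exists r0. split. exact Hr0. intros z Hz1 Hz2.
  assert (Hvz := Hp (Cmod z) (conj (Cmod_ge_0 z) Hz2)).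
  specialize (Hs (Cmod z) (conj Hz1 Hz2)). rewrite Rabs_pos_eq in Hs by lra.
  assert (Hhz : Cmod (h z) <= M') by (eapply Rle_trans; [apply Hb, Hz2 | apply Rmax_l]).
  apply Rle_lt_trans with (M' * v (Cmod z)). apply Rmult_le_compat_r; lra.
  replace eps with (M' * (eps / M')) by (field; lra). apply Rmult_lt_compat_l; auto.
Qed.

Lemma wbound_pointwise v h K z : is_weight v -> wbound v h K -> Cmod z < 1 -> Cmod (h z) <= K / v (Cmod z).
Proof.
  intros [_ [_ Hp]] Hb Hz. assert (Hvz := Hp (Cmod z) (conj (Cmod_ge_0 z) Hz)).
  specialize (Hb z Hz). apply (Rmult_le_reg_r (v (Cmod z))); auto.
  unfold Rdiv. rewrite Rmult_assoc, Rinv_l, Rmult_1_r by lra. exact Hb.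
Qed.

Lemma Ces_wbound v t g K : is_weight v -> 0 <= t < 1 -> holD g -> 0 <= K -> wbound v g K ->
  wbound v (Ces t g) (K / (1 - t)).
Proof.
  intros Hw Ht Hg HK Hb z Hz. unfold inD in Hz.
  destruct Hw as [Hc [Hm Hp]].
  assert (Hvz := Hp (Cmod z) (conj (Cmod_ge_0 z) Hz)).
  assert (HB : Cmod (Ces t g z) <= (K / v (Cmod z)) / (1 - t)).
  { apply Ces_bound; auto. intros s Hs.
    assert (Hsz := Cmod_sz s z Hs).
    assert (Hsz1 : Cmod (RtoC s * z) < 1) by lra.
    eapply Rle_trans. apply (wbound_pointwise v g K); auto. split; auto.
    assert (Hvs := Hp _ (conj (Cmod_ge_0 (RtoC s * z)) Hsz1)).
    assert (Hmon := Hm _ _ (Cmod_ge_0 (RtoC s * z)) Hsz Hz).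
    unfold Rdiv. apply Rmult_le_compat_l; auto. apply Rinv_le_contravar; auto. }
  apply Rle_trans with ((K / v (Cmod z)) / (1 - t) * v (Cmod z)).
  apply Rmult_le_compat_r; lra.
  right. field. lra.
Qed.

Lemma Cmod_inv_pos (K : R) : 0 < K -> Cmod (RtoC (/ K)) = / K.
Proof. intros HK. rewrite Cmod_R, Rabs_pos_eq. reflexivity. left. apply Rinv_0_lt_compat; auto. Qed.

Theorem lemma2p6 (v : R -> R) (t : R)
  (Hv : is_weight v) (Hv0 : filterlim v (at_left 1) (locally 0))
  (Ht : 0 <= t < 1)
  (phi : (C -> C) -> C) (Hphi : in_dual0 v phi)
  (F G : (C -> C) -> C) (HF : in_X v F) (HG : in_X v G)
  (HFphi : forall h, H0 v h -> F h = phi h)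
  (HGphi : forall h, H0 v h -> G h = phi (Ces t h))
  (f : C -> C) (Hf : Hinf v f) :
  G f = F (Ces t f).
Proof.
  destruct Hf as [Hfh [c Hc]].
  destruct HF as [[FA FS] Fc]. destruct HG as [[GA GS] Gc].
  assert (Hv' := Hv). destruct Hv' as [Hvc [Hvm Hvp]].
  set (K := Rmax c 1).
  assert (HK : 0 < K) by (unfold K; generalize (Rmax_r c 1); lra).
  assert (Hfb : wbound v f K) by (intros z Hz; eapply Rle_trans; [apply Hc, Hz | apply Rmax_l]).
  set (K' := K / (1 - t)).
  assert (HK' : 0 < K') by (unfold K'; apply Rdiv_lt_0_compat; lra).
  assert (UvS : forall h L, 0 < L -> holD h -> wbound v h L -> Uv v (fscal (RtoC (/ L)) h)).
  { intros h L HL Hh Hb. split. apply holD_scal, Hh.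
    replace 1 with (Cmod (RtoC (/ L)) * L). apply wbound_scal; auto.
    rewrite Cmod_inv_pos by auto. field. lra. }
  assert (LinG : forall h L, Hinf v h -> G (fscal (RtoC (/ L)) h) = (RtoC (/ L) * G h)%C) by (intros; apply GS; auto).
  assert (LinF : forall h L, Hinf v h -> F (fscal (RtoC (/ L)) h) = (RtoC (/ L) * F h)%C) by (intros; apply FS; auto).
  assert (HCf : holD (Ces t f)) by (apply Ces_holD; auto).
  assert (HCfb : wbound v (Ces t f) K') by (apply Ces_wbound; auto; lra).
  assert (Main : forall eps, 0 < eps -> Cmod (G f - F (Ces t f)) < eps).
  { intros eps He.
    destruct (Gc _ (UvS f K HK Hfh Hfb) (eps / (2 * K))) as [r1 [d1 [Hr1 [Hd1 HG1]]]].
    { apply Rdiv_lt_0_compat; lra. }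
    destruct (Fc _ (UvS _ K' HK' HCf HCfb) (eps / (2 * K'))) as [r2 [d2 [Hr2 [Hd2 HF2]]]].
    { apply Rdiv_lt_0_compat; lra. }
    set (R0 := Rmax r1 r2).
    assert (HR0 : 0 <= R0 < 1) by (unfold R0; split; [eapply Rle_trans; [apply (proj1 Hr1) | apply Rmax_l] | apply Rmax_lub_lt; lra]).
    set (e0 := Rmin (d1 * K) (d2 * K' * (1 - t)) / 2).
    assert (He0 : 0 < e0) by (unfold e0; apply Rdiv_lt_0_compat; [apply Rmin_pos; apply Rmult_lt_0_compat; try apply Rmult_lt_0_compat; lra | lra]).
    destruct (unif_disc f R0 HR0 (fun w Hw => holD_Ccont f w Hfh Hw) e0 He0) as [d [Hd Hu]].
    set (rho := Rmax 0 (1 - d / 2)).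
    assert (Hrho : 0 <= rho < 1) by (unfold rho; split; [apply Rmax_l | apply Rmax_lub_lt; lra]).
    assert (Hrho2 : 1 - rho < d) by (unfold rho; generalize (Rmax_r 0 (1 - d / 2)); lra).
    set (fr := dil rho f).
    assert (Hfrh : holD fr) by (apply holD_dil; auto; lra).
    assert (Hfrz : forall z, Cmod z < 1 -> fr z = f (RtoC rho * z)%C).
    { intros z Hz. unfold fr, dil. destruct (Rlt_dec (Cmod z) 1); [reflexivity | contradiction]. }
    assert (Hrz : forall z, Cmod (RtoC rho * z) = rho * Cmod z).
    { intros z. rewrite Cmod_RtoC_mult, Rabs_pos_eq by lra. reflexivity. }
    assert (Hrz1 : forall z, Cmod z < 1 -> Cmod (RtoC rho * z) <= rho /\ Cmod (RtoC rho * z) <= Cmod z).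
    { intros z Hz. rewrite Hrz. assert (0 <= Cmod z) by apply Cmod_ge_0. split; nra. }
    assert (Hfrb : wbound v fr K).
    { intros z Hz. unfold inD in Hz. rewrite Hfrz by auto.
      destruct (Hrz1 z Hz) as [A1 A2].
      apply Rle_trans with (Cmod (f (RtoC rho * z)%C) * v (Cmod (RtoC rho * z)%C)).
      apply Rmult_le_compat_l. apply Cmod_ge_0. apply Hvm; auto. apply Cmod_ge_0.
      apply Hfb. unfold inD. lra. }
    assert (Hvr : 0 < v rho) by (apply Hvp; lra).
    assert (Hfrbd : forall z, Cmod z < 1 -> Cmod (fr z) <= K / v rho).
    { intros z Hz. rewrite Hfrz by auto. destruct (Hrz1 z Hz) as [A1 A2].
      assert (W := wbound_pointwise v f K (RtoC rho * z)%C Hv Hfb ltac:(lra)).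
      eapply Rle_trans. exact W. unfold Rdiv. apply Rmult_le_compat_l. lra.
      apply Rinv_le_contravar. exact Hvr. apply Hvm; [apply Cmod_ge_0 | exact A1 | lra]. }
    assert (H0fr : H0 v fr) by (eapply H0_of_bounded; eauto).
    assert (HCfr : holD (Ces t fr)) by (apply Ces_holD; auto).
    assert (HCfrb : wbound v (Ces t fr) K') by (apply Ces_wbound; auto; lra).
    assert (H0Cfr : H0 v (Ces t fr)).
    { apply (H0_of_bounded v _ ((K / v rho) / (1 - t))); auto.
      intros z Hz. apply Ces_bound; auto. intros s Hs. apply Hfrbd.
      generalize (Cmod_sz s z Hs); lra. }
    assert (Hap : forall z, Cmod z <= R0 -> Cmod (fr z - f z) < e0).
    { intros z Hz. rewrite Hfrz by lra. apply Hu; auto.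
      replace (RtoC rho * z - z)%C with (RtoC (rho - 1) * z)%C by Ceqr.
      rewrite Cmod_RtoC_mult, Rabs_left1 by lra.
      assert (0 <= Cmod z) by apply Cmod_ge_0. nra. }
    assert (A1 : Cmod (G (fscal (RtoC (/ K)) fr) - G (fscal (RtoC (/ K)) f)) < eps / (2 * K)).
    { apply HG1. apply UvS; auto.
      intros z Hz. unfold fscal. replace (RtoC (/ K) * fr z - RtoC (/ K) * f z)%C with (RtoC (/ K) * (fr z - f z))%C by Ceqr.
      rewrite Cmod_mult, Cmod_inv_pos by auto.
      assert (Hz' : Cmod z <= R0) by (eapply Rle_trans; [exact Hz | apply Rmax_l]).
      assert (B := Hap z Hz').
      assert (e0 <= d1 * K / 2) by (unfold e0; generalize (Rmin_l (d1 * K) (d2 * K' * (1 - t))); lra).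
      apply (Rmult_lt_reg_l K); auto. rewrite <- Rmult_assoc, Rinv_r, Rmult_1_l by lra. nra. }
    assert (A2 : Cmod (F (fscal (RtoC (/ K')) (Ces t fr)) - F (fscal (RtoC (/ K')) (Ces t f))) < eps / (2 * K')).
    { apply HF2. apply UvS; auto.
      intros z Hz. unfold fscal. replace (RtoC (/ K') * Ces t fr z - RtoC (/ K') * Ces t f z)%C with (RtoC (/ K') * (Ces t fr z - Ces t f z))%C by Ceqr.
      rewrite Cmod_mult, Cmod_inv_pos by auto.
      assert (Hz' : Cmod z <= R0) by (eapply Rle_trans; [exact Hz | apply Rmax_r]).
      assert (B : Cmod (Ces t fr z - Ces t f z) <= e0 / (1 - t)).
      { apply Ces_diff; auto. lra. intros s Hs. left. apply Hap.
        generalize (Cmod_sz s z Hs); lra. }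
      assert (e0 <= d2 * K' * (1 - t) / 2) by (unfold e0; generalize (Rmin_r (d1 * K) (d2 * K' * (1 - t))); lra).
      assert (B' : Cmod (Ces t fr z - Ces t f z) < d2 * K').
      { eapply Rle_lt_trans. exact B. apply (Rmult_lt_reg_r (1 - t)). lra.
        unfold Rdiv. rewrite Rmult_assoc, Rinv_l, Rmult_1_r by lra. nra. }
      apply (Rmult_lt_reg_l K'); auto. rewrite <- Rmult_assoc, Rinv_r, Rmult_1_l by lra. lra. }
    assert (Hinffr : Hinf v fr) by (split; [exact Hfrh | exists K; exact Hfrb]).
    assert (Hinff : Hinf v f) by (split; [exact Hfh | exists K; exact Hfb]).
    assert (HinfCfr : Hinf v (Ces t fr)) by (split; [exact HCfr | exists K'; exact HCfrb]).
    assert (HinfCf : Hinf v (Ces t f)) by (split; [exact HCf | exists K'; exact HCfb]).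
    rewrite (LinG fr K Hinffr), (LinG f K Hinff) in A1.
    rewrite (LinF _ K' HinfCfr), (LinF _ K' HinfCf) in A2.
    assert (E : G fr = F (Ces t fr)) by (rewrite HGphi, HFphi; auto).
    replace (G f - F (Ces t f))%C with
      (RtoC K * - (RtoC (/ K) * G fr - RtoC (/ K) * G f) + RtoC K' * (RtoC (/ K') * F (Ces t fr) - RtoC (/ K') * F (Ces t f)))%C.
    2:{ rewrite E. rewrite !RtoC_inv by lra. field. split; intros Hc0; apply RtoC_inj in Hc0; lra. }
    eapply Rle_lt_trans. apply Cmod_triangle.
    rewrite !Cmod_mult, Cmod_opp, !Cmod_R, !Rabs_pos_eq by lra.
    apply Rlt_le_trans with (K * (eps / (2 * K)) + K' * (eps / (2 * K'))).
    apply Rplus_lt_compat; apply Rmult_lt_compat_l; auto.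
    right. field. lra. }
  apply Ceq_minus.
  apply Cmod_eq_0.
  destruct (Req_dec (Cmod (G f - F (Ces t f))) 0) as [E | E]; auto.
  exfalso. assert (Hp := Cmod_ge_0 (G f - F (Ces t f))).
  specialize (Main (Cmod (G f - F (Ces t f))) ltac:(lra)). lra.
Qed.
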